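(* Let $p>1$, $\alpha\in\mathbb{R}$, $K_1>0$. There exists $C(K_1)>0$ such that for all $|z|\le K_1$ and all $s\ge1$, $$\left|h(s)|z|^{p-1}z\frac{\ln^\alpha(\psi_1^2(s)z^2+2)}{\ln^\alpha(\psi_1^2(s)+2)}-\frac{|z|^{p-1}z}{p-1}\right|\le\frac{C(K_1)}{s}.$$
   Context: For $\tau>0$ let $\Psi(\tau)>0$ be the unique number with $\int_{\Psi(\tau)}^\infty\frac{dx}{x^p\ln^\alpha(x^2+2)}=\tau$ (equivalently, for $T>0$, $\psi(t)=\Psi(T-t)$ is the positive solution of $\psi'=\psi^p\ln^\alpha(\psi^2+2)$ with $\psi\to+\infty$ as $t\to T$); $\psi_1(s)=\Psi(e^{-s})$ and $h(s)=e^{-s}\psi_1^{p-1}(s)\ln^\alpha(\psi_1^2(s)+2)$. *)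

(* Defs.v *)
From Stdlib Require Import Reals ClassicalEpsilon.
From Coquelicot Require Import Coquelicot.
Open Scope R_scope.

Definition integrand (p alpha : R) (x : R) : R :=
  / (Rpower x p * Rpower (ln (x ^ 2 + 2)) alpha).

Definition Psi (p alpha tau : R) : R :=
  epsilon (inhabits 0)
    (fun y => 0 < y /\
       is_RInt_gen (integrand p alpha) (at_point y) (Rbar_locally p_infty) tau).

Definition psi1 (p alpha s : R) : R := Psi p alpha (exp (- s)).

Definition hfun (p alpha s : R) : R :=
  exp (- s) * Rpower (psi1 p alpha s) (p - 1)
    * Rpower (ln (psi1 p alpha s ^ 2 + 2)) alpha.

(* Main.v *)
Require Import Defs.
From Stdlib Require Import Reals Lra Psatz Classical ClassicalEpsilon.
From Coquelicot Require Import Coquelicot.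
Open Scope R_scope.

Lemma ln_le_xm1 x : 0 < x -> ln x <= x - 1.
Proof. intros Hx. pose proof (exp_ineq1_le (ln x)). rewrite exp_ln in H; lra. Qed.

Lemma ln_ge_1mi x : 0 < x -> 1 - / x <= ln x.
Proof. intros Hx. pose proof (ln_le_xm1 (/ x) (Rinv_0_lt_compat _ Hx)).
  rewrite ln_Rinv in H; lra. Qed.

Lemma t_le_exp t : t <= exp t.
Proof. pose proof (exp_ineq1_le t); lra. Qed.

Lemma texp_le1 t : t * exp (- t) <= 1.
Proof. pose proof (t_le_exp t). pose proof (exp_pos (-t)).
  rewrite exp_Ropp in *. assert (0 < exp t) by apply exp_pos.
  apply (Rmult_le_reg_r (exp t)); auto. rewrite Rmult_assoc, Rinv_l by lra. lra. Qed.

Lemma exp_m1_bound t : Rabs (exp t - 1) <= Rabs t * exp (Rabs t).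
Proof.
  destruct (Rle_or_lt 0 t) as [H|H].
  - rewrite (Rabs_pos_eq t H). pose proof (exp_ineq1_le (-t)).
    rewrite exp_Ropp in H0. pose proof (exp_pos t).
    assert (1 <= exp t) by (pose proof (exp_ineq1_le t); lra).
    rewrite Rabs_pos_eq by lra.
    assert ((1 - t) * exp t <= 1).
    { apply (Rmult_le_reg_r (/ exp t)). apply Rinv_0_lt_compat; lra.
      rewrite Rmult_assoc, Rinv_r by lra. lra. }
    nra.
  - rewrite (Rabs_left t H). pose proof (exp_ineq1_le t).
    assert (exp t < 1) by (rewrite <- exp_0; apply exp_increasing; lra).
    rewrite Rabs_left1 by lra.
    assert (1 <= exp (-t)) by (pose proof (exp_ineq1_le (-t)); lra). nra.
Qed.

Lemma ln2_gt : / 2 < ln 2. Proof. exact ln_lt_2. Qed.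

Lemma ln_ge_m1 u : ln 2 <= u -> -1 <= ln u.
Proof. intros Hu. pose proof ln2_gt. pose proof (ln_ge_1mi u ltac:(lra)).
  assert (/ u <= 2). { rewrite <- (Rinv_inv 2). apply Rinv_le_contravar; lra. }
  lra. Qed.

Lemma ln_le_lin d u : 0 < d -> 0 < u -> ln u <= d * u - ln d - 1.
Proof. intros. pose proof (ln_le_xm1 (d*u) ltac:(nra)). rewrite ln_mult in H1 by lra. lra. Qed.

Lemma exp_le_exp x y : x <= y -> exp x <= exp y.
Proof. intros [H|H]. left; apply exp_increasing; auto. subst; lra. Qed.

Lemma zabs p a c Kz : 1 < p -> 0 <= c -> exists C2, 0 < C2 /\
  forall u v zt, ln 2 <= u -> ln 2 <= v -> v <= u + c -> zt <= Kz ->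
   (0 <= zt -> u <= v) -> (zt < 0 -> u + 2 * zt <= v) ->
   exp (p * zt) * Rabs (exp (a * (ln v - ln u)) - 1) <= C2 / u.
Proof.
  intros Hp Hc. pose proof ln2_gt as L2.
  set (A := Rabs a). set (Q := exp (p * Kz)).
  set (E1 := exp (A * (c / ln 2))). set (E2 := exp (A * (c / ln 2 + 1))).
  set (d := p / (8 * (A + 1))).
  assert (HA : 0 <= A) by apply Rabs_pos.
  assert (Hd : 0 < d) by (unfold d; apply Rdiv_lt_0_compat; lra).
  assert (HAd : A * d <= p / 8).
  { unfold d. apply (Rmult_le_reg_r (8 * (A+1))). lra.
    field_simplify; try lra. }
  set (D := exp (A * (c / ln 2 + Rabs (ln d)))).
  assert (HQ : 0 < Q) by apply exp_pos.
  assert (HE1 : 0 < E1) by apply exp_pos. assert (HE2 : 0 < E2) by apply exp_pos.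
  assert (HD : 0 < D) by apply exp_pos.
  exists (Q*A*c*E1 + A*E2*(Q*c+4/p) + 8*(D+1)/p + 1). split.
  { assert (0 <= Q*A*c*E1) by (repeat apply Rmult_le_pos; lra).
    assert (0 <= A*E2*(Q*c+4/p)).
    { apply Rmult_le_pos; [nra|]. assert (0 < 4/p) by (apply Rdiv_lt_0_compat; lra). nra. }
    assert (0 < 8*(D+1)/p) by (apply Rdiv_lt_0_compat; lra). lra. }
  intros u v zt Hu Hv Hvu Hz H0 H1.
  assert (Hu0 : 0 < u) by lra. assert (Hv0 : 0 < v) by lra.
  set (r := ln v - ln u).
  assert (hr_up : r <= c / u).
  { unfold r. rewrite <- ln_div by lra. eapply Rle_trans. apply ln_le_xm1.
    apply Rdiv_lt_0_compat; lra. apply (Rmult_le_reg_r u); auto.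
    field_simplify; lra. }
  assert (hr_lo : (v - u) / v <= r).
  { unfold r. rewrite <- ln_div by lra. eapply Rle_trans. 2: apply ln_ge_1mi.
    2: apply Rdiv_lt_0_compat; lra. right. field. lra. }
  assert (hcu : c / u <= c / ln 2).
  { apply Rmult_le_compat_l; auto. apply Rinv_le_contravar; lra. }
  assert (Hpos1 : 0 <= Q*A*c*E1) by (repeat apply Rmult_le_pos; lra).
  assert (Hpos2 : 0 <= A*E2*(Q*c+4/p)).
  { apply Rmult_le_pos; [nra|]. assert (0 < 4/p) by (apply Rdiv_lt_0_compat; lra). nra. }
  assert (Hpos3 : 0 < 8*(D+1)/p) by (apply Rdiv_lt_0_compat; lra).
  assert (Hgoal : forall X, 0 <= X -> X <= Q*A*c*E1 + A*E2*(Q*c+4/p) + 8*(D+1)/p + 1 ->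
     exp (p * zt) * Rabs (exp (a * r) - 1) <= X / u ->
     exp (p * zt) * Rabs (exp (a * r) - 1) <= (Q*A*c*E1 + A*E2*(Q*c+4/p) + 8*(D+1)/p + 1) / u).
  { intros X HX HX2 HX3. eapply Rle_trans; [exact HX3|]. apply Rmult_le_compat_r; auto.
    left; apply Rinv_0_lt_compat; lra. }
  fold r.
  assert (Hm1 : Rabs (exp (a * r) - 1) <= Rabs (a * r) * exp (Rabs (a * r))) by apply exp_m1_bound.
  assert (HarA : Rabs (a * r) = A * Rabs r) by (unfold A; apply Rabs_mult).
  assert (Hez : 0 < exp (p * zt)) by apply exp_pos.
  destruct (Rle_or_lt 0 zt) as [Hz0|Hz0].
  -
    specialize (H0 Hz0).
    assert (0 <= r) by (eapply Rle_trans; [|exact hr_lo]; apply Rdiv_le_0_compat; lra).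
    rewrite (Rabs_pos_eq r) in HarA by lra.
    assert (HeQ : exp (p * zt) <= Q) by (unfold Q; apply exp_le_exp; nra).
    assert (Hb : Rabs (exp (a * r) - 1) <= A * (c / u) * E1).
    { eapply Rle_trans; [exact Hm1|]. rewrite HarA. apply Rmult_le_compat.
      nra. left; apply exp_pos. nra. unfold E1; apply exp_le_exp; nra. }
    apply (Hgoal (Q*A*c*E1)); auto. lra.
    eapply Rle_trans. apply Rmult_le_compat; [lra|apply Rabs_pos|exact HeQ|exact Hb].
    right. field. lra.
  - specialize (H1 Hz0).
    destruct (Rle_or_lt (- 4 * zt) u) as [Hs|Hs].
    +
      assert (Hv2 : u / 2 <= v) by lra.
      assert (hr2 : 4 * zt / u <= r).
      { eapply Rle_trans; [|exact hr_lo].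
        apply Rle_trans with (2 * zt / v).
        { unfold Rdiv. rewrite (Rmult_comm 4), (Rmult_comm 2), !Rmult_assoc.
          apply Rmult_le_compat_neg_l. lra.
          apply (Rmult_le_reg_r (u * v)). nra. field_simplify; lra. }
        apply Rmult_le_compat_r. left; apply Rinv_0_lt_compat; lra. lra. }
      assert (Habs : Rabs r <= (c - 4 * zt) / u).
      { apply Rabs_le. split.
        - assert (c / u >= 0) by (apply Rle_ge, Rdiv_le_0_compat; lra).
          unfold Rdiv in *. lra.
        - unfold Rdiv in *. assert (- 4 * zt * / u >= 0).
          { apply Rle_ge, Rmult_le_pos; [lra|left; apply Rinv_0_lt_compat; lra]. } lra. }
      assert (Habs2 : Rabs r <= c / ln 2 + 1).
      { eapply Rle_trans; [exact Habs|]. unfold Rdiv. rewrite Rmult_minus_distr_r.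
        assert (- 4 * zt * / u <= 1).
        { apply (Rmult_le_reg_r u); auto. rewrite Rmult_assoc, Rinv_l by lra. lra. }
        unfold Rdiv in hcu. lra. }
      assert (Hb : Rabs (exp (a * r) - 1) <= A * ((c - 4 * zt) / u) * E2).
      { eapply Rle_trans; [exact Hm1|]. rewrite HarA. apply Rmult_le_compat.
        apply Rmult_le_pos; [auto|apply Rabs_pos]. left; apply exp_pos. apply Rmult_le_compat_l; auto.
        unfold E2; apply exp_le_exp; nra. }
      assert (HeQ : exp (p * zt) <= Q) by (unfold Q; apply exp_le_exp; nra).
      assert (Hzz : (- p * zt) * exp (- (- p * zt)) <= 1) by apply texp_le1.
      replace (- (- p * zt)) with (p * zt) in Hzz by ring.
      assert (Hk : exp (p * zt) * (c - 4 * zt) <= Q * c + 4 / p).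
      { assert (exp (p*zt) * (-zt) <= 1 / p).
        { apply (Rmult_le_reg_l p). lra. field_simplify; lra. }
        assert (exp (p*zt) * c <= Q * c) by (apply Rmult_le_compat_r; lra).
        unfold Rdiv in *. lra. }
      apply (Hgoal (A*E2*(Q*c+4/p))); auto. lra.
      eapply Rle_trans. apply Rmult_le_compat_l. lra. exact Hb.
      replace (exp (p * zt) * (A * ((c - 4 * zt) / u) * E2)) with
        ((exp (p * zt) * (c - 4 * zt)) * (A * E2) / u) by (field; lra).
      replace (A * E2 * (Q * c + 4 / p) / u) with ((Q * c + 4 / p) * (A * E2) / u) by (field; lra).
      apply Rmult_le_compat_r. left; apply Rinv_0_lt_compat; lra.
      apply Rmult_le_compat_r. nra. exact Hk.
    +
      assert (HeC : exp (p * zt) <= exp (- (p * u / 4))) by (apply exp_le_exp; nra).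
      assert (Hlv : -1 <= ln v) by (apply ln_ge_m1; lra).
      assert (Hlu : ln u <= d * u - ln d - 1) by (apply ln_le_lin; lra).
      assert (Habs : Rabs r <= c / ln 2 + Rabs (ln d) + d * u).
      { apply Rabs_le. pose proof (Rle_abs (- ln d)). rewrite Rabs_Ropp in H.
        assert (0 <= d * u) by nra. pose proof (Rabs_pos (ln d)). assert (0 <= c / ln 2) by (apply Rdiv_le_0_compat; lra). split; unfold r in *; lra. }
      assert (Hb : Rabs (exp (a * r) - 1) <= D * exp (p * u / 8) + 1).
      { eapply Rle_trans. apply Rabs_triang. rewrite Rabs_Ropp, Rabs_R1, Rabs_pos_eq by (left; apply exp_pos).
        apply Rplus_le_compat_r. eapply Rle_trans. apply exp_le_exp. apply Rle_abs.
        rewrite HarA. unfold D. rewrite <- exp_plus. apply exp_le_exp.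
        assert (A * Rabs r <= A * (c / ln 2 + Rabs (ln d) + d * u)) by (apply Rmult_le_compat_l; auto).
        assert (A * (d * u) <= p * u / 8) by (rewrite <- Rmult_assoc; nra). nra. }
      assert (Hk : exp (- (p * u / 8)) <= 8 / (p * u)).
      { pose proof (texp_le1 (p * u / 8)). apply (Rmult_le_reg_l (p * u / 8)). nra.
        field_simplify; nra. }
      apply (Hgoal (8*(D+1)/p)); auto. lra. lra.
      eapply Rle_trans. apply Rmult_le_compat. lra. apply Rabs_pos. exact HeC. exact Hb.
      replace (exp (- (p * u / 4)) * (D * exp (p * u / 8) + 1)) with
        (D * (exp (- (p * u / 4)) * exp (p * u / 8)) + exp (- (p * u / 4))) by ring.
      rewrite <- exp_plus. replace (- (p * u / 4) + p * u / 8) with (- (p * u / 8)) by field.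
      assert (exp (- (p * u / 4)) <= exp (- (p * u / 8))) by (apply exp_le_exp; nra).
      apply Rle_trans with ((D + 1) * exp (- (p * u / 8))). nra.
      apply Rle_trans with ((D+1) * (8 / (p * u))). apply Rmult_le_compat_l; lra.
      right. field. lra.
Qed.

Definition ell x := ln (x^2+2).
Definition Fp p a x := exp ((1-p) * ln x - a * ln (ell x)).
Definition dF p a x := integrand p a x * ((1-p) - a * (2*x^2/((x^2+2)*ell x))).

Lemma ell_ge x : ln 2 <= ell x.
Proof. unfold ell. apply ln_le. lra. nra. Qed.
Lemma ell_pos x : 0 < ell x.
Proof. pose proof (ell_ge x). pose proof ln2_gt. lra. Qed.

Lemma f_exp p a x : 0 < x -> integrand p a x = exp (- (p * ln x) - a * ln (ell x)).
Proof. intros. unfold integrand, Rpower, ell. unfold Rminus. rewrite exp_plus, !exp_Ropp.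
  rewrite Rinv_mult. reflexivity. Qed.

Lemma f_pos p a x : 0 < x -> 0 < integrand p a x.
Proof. intros. rewrite f_exp by auto. apply exp_pos. Qed.

Lemma f_exd p a x : 0 < x -> ex_derive (integrand p a) x.
Proof. intros Hx. unfold integrand, Rpower. pose proof (ell_pos x). unfold ell in H.
  assert (H' : 0 < ln (x*(x*1)+2)) by (replace (x*(x*1)) with (x^2) by ring; exact H).
  auto_derive. repeat split; try lra; try nra.
  apply Rmult_integral_contrapositive_currified; apply Rgt_not_eq, exp_pos. Qed.

Lemma f_cont p a x : 0 < x -> continuous (integrand p a) x.
Proof. intros. apply (@ex_derive_continuous R_AbsRing R_NormedModule), f_exd; auto. Qed.

Lemma dF_cont p a x : 0 < x -> continuous (dF p a) x.
Proof. intros Hx. apply (@ex_derive_continuous R_AbsRing R_NormedModule). unfold dF, integrand, Rpower.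
  pose proof (ell_pos x). unfold ell in *.
  assert (H' : 0 < ln (x*(x*1)+2)) by (replace (x*(x*1)) with (x^2) by ring; exact H).
  auto_derive. repeat split; try lra; try nra.
  apply Rmult_integral_contrapositive_currified; apply Rgt_not_eq, exp_pos. Qed.

Lemma F_der p a x : 0 < x -> is_derive (Fp p a) x (dF p a x).
Proof. intros Hx. unfold Fp, dF. pose proof (ell_pos x). unfold ell in *.
  rewrite f_exp by auto. unfold ell.
  assert (H' : 0 < ln (x*(x*1)+2)) by (replace (x*(x*1)) with (x^2) by ring; exact H).
  auto_derive. repeat split; try lra; try nra.
  replace (x*(x*1)) with (x^2) by ring.
  replace ((1 - p) * ln x + - (a * ln (ln (x^2+2)))) with
    (ln x + (- (p * ln x) - a * ln (ln (x ^ 2 + 2)))) by ring.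
  rewrite exp_plus, exp_ln by auto. field; repeat split; try lra; nra.
Qed.

Lemma ell_le x : 1 <= x -> ell x <= ln 3 + 2 * ln x.
Proof. intros. unfold ell. replace (ln 3 + 2 * ln x) with (ln (3 * (x * x))).
  apply ln_le. nra. simpl. nra.
  assert (0 < x * x) by nra. rewrite !ln_mult by lra. ring. Qed.

Lemma ell_mono x y : 0 < y -> y <= x -> ell y <= ell x.
Proof. intros. unfold ell. apply ln_le; nra. Qed.

Lemma F_pos p a x : 0 < Fp p a x.
Proof. apply exp_pos. Qed.

Lemma F_lim p a : 1 < p -> forall eta, 0 < eta -> exists M, forall x, M < x -> Fp p a x < eta.
Proof.
  intros Hp eta Heta. pose proof ln2_gt.
  set (A := Rabs a). assert (HA : 0 <= A) by apply Rabs_pos.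
  set (d := (p - 1) / (4 * (A + 1))).
  assert (Hd : 0 < d) by (unfold d; apply Rdiv_lt_0_compat; lra).
  assert (HAd : A * d <= (p - 1) / 4).
  { unfold d. apply (Rmult_le_reg_r (4 * (A+1))). lra. field_simplify; try lra. }
  set (Cst := A * (1 + d * ln 3 + Rabs (ln d))).
  set (K := 2 * (Cst - ln eta) / (p - 1)).
  exists (exp (Rabs K)). intros x Hx.
  assert (Hx1 : 1 <= x) by (pose proof (exp_ineq1_le (Rabs K)); pose proof (Rabs_pos K); lra).
  assert (Hlx : Rabs K < ln x).
  { rewrite <- (ln_exp (Rabs K)). apply ln_increasing; auto. apply exp_pos. }
  assert (Hlx0 : 0 <= ln x) by (pose proof (Rabs_pos K); lra).
  assert (HK : K < ln x) by (pose proof (Rle_abs K); lra).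
  unfold Fp. rewrite <- (exp_ln eta) by auto. apply exp_increasing.
  pose proof (ell_le x Hx1). pose proof (ell_ge x).
  assert (Hl1 : -1 <= ln (ell x)) by (apply ln_ge_m1; auto).
  assert (Hl2 : ln (ell x) <= d * ell x - ln d - 1) by (apply ln_le_lin; auto; apply ell_pos).
  assert (Hb : Rabs (ln (ell x)) <= 1 + d * ln 3 + Rabs (ln d) + 2 * d * ln x).
  { pose proof (Rle_abs (- ln d)). rewrite Rabs_Ropp in H2. pose proof (Rabs_pos (ln d)).
    assert (0 <= ln 3) by (rewrite <- ln_1; apply ln_le; lra).
    apply Rabs_le; split; nra. }
  assert (Hc : - (a * ln (ell x)) <= A * (1 + d * ln 3 + Rabs (ln d) + 2 * d * ln x)).
  { eapply Rle_trans. apply Rle_abs. rewrite Rabs_Ropp, Rabs_mult. apply Rmult_le_compat_l; auto. }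
  assert (HK2 : (p - 1) * K = 2 * (Cst - ln eta)) by (unfold K; field; lra).
  assert (A * (2 * d * ln x) <= (p - 1) / 2 * ln x) by nra.
  assert ((p-1) * K < (p - 1) * ln x) by (apply Rmult_lt_compat_l; lra).
  unfold Cst in HK2. nra.
Qed.

Lemma filterlim_at_point_self (f : R -> R) y : filterlim f (at_point y) (locally (f y)).
Proof. intros P HP. unfold filtermap, at_point. apply locally_singleton. exact HP. Qed.

Lemma F_filterlim p a : 1 < p -> filterlim (Fp p a) (Rbar_locally p_infty) (locally 0).
Proof. intros Hp. apply filterlim_locally. intros eps.
  destruct (F_lim p a Hp eps (cond_pos eps)) as [M HM]. exists M. intros x Hx.
  specialize (HM x Hx). pose proof (F_pos p a x).
  change (Rabs (Fp p a x - 0) < eps). rewrite Rminus_0_r, Rabs_pos_eq; lra. Qed.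

Lemma Ibound p a y I : 1 < p -> 0 < y ->
  is_RInt_gen (integrand p a) (at_point y) (Rbar_locally p_infty) I ->
  Rabs ((p - 1) * I - Fp p a y) <= (2 * Rabs a / ell y) * I.
Proof.
  intros Hp Hy HI.
  assert (Hprod : forall P : R -> Prop, (forall x, y <= x -> P x) ->
     filter_prod (at_point y) (Rbar_locally p_infty)
       (fun ab : R * R => forall x, Rmin (fst ab) (snd ab) <= x <= Rmax (fst ab) (snd ab) -> P x)).
  { intros P HP. apply (Filter_prod _ _ _ (fun x => x = y) (fun b => y < b)).
    reflexivity. exists y; auto.
    intros x b -> Hb z Hz. simpl in Hz. rewrite Rmin_left, Rmax_right in Hz by lra. apply HP; lra. }
  assert (HD : is_RInt_gen (dF p a) (at_point y) (Rbar_locally p_infty) (0 - Fp p a y)).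
  { apply (is_RInt_gen_ext (Derive (Fp p a))).
    - apply (Filter_prod _ _ _ (fun x => x = y) (fun b => y < b)). reflexivity. exists y; auto.
      intros x b -> Hb z Hz. simpl in Hz. rewrite Rmin_left, Rmax_right in Hz by lra.
      apply is_derive_unique, F_der; lra.
    - apply is_RInt_gen_Derive.
      + apply Hprod. intros x Hx. exists (dF p a x). apply F_der; lra.
      + apply Hprod. intros x Hx. apply (continuous_ext_loc _ (dF p a)).
        * assert (Hx0 : 0 < x) by lra. exists (mkposreal x Hx0). intros z Hz.
          symmetry; apply is_derive_unique, F_der.
          change (Rabs (z - x) < x) in Hz. apply Rabs_lt_between in Hz. lra.
        * apply dF_cont; lra.
      + apply filterlim_at_point_self.
      + apply F_filterlim; auto. }
  pose proof (is_RInt_gen_plus _ _ _ _ (is_RInt_gen_scal _ (p-1) _ HI) HD) as HS.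
  pose proof (is_RInt_gen_scal _ (2 * Rabs a / ell y) _ HI) as HG.
  assert (Hfp : filter_prod (at_point y) (Rbar_locally p_infty) (fun ab : R * R => fst ab <= snd ab)).
  { apply (Filter_prod _ _ _ (fun x => x = y) (fun b => y < b)). reflexivity. exists y; auto.
    intros x b -> Hb. simpl. lra. }
  assert (Hpt : forall x, y <= x -> norm (plus ((fun y0 : R => scal (p - 1) (integrand p a y0)) x) (dF p a x))
        <= scal (2 * Rabs a / ell y) (integrand p a x)).
  { intros x Hx. change (Rabs ((p - 1) * integrand p a x + dF p a x) <= 2 * Rabs a / ell y * integrand p a x).
    unfold dF. assert (Hx0 : 0 < x) by lra. pose proof (f_pos p a x Hx0).
    pose proof (ell_pos x). pose proof (ell_pos y). pose proof (ell_mono x y Hy Hx).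
    replace ((p - 1) * integrand p a x + integrand p a x * (1 - p - a * (2 * x ^ 2 / ((x ^ 2 + 2) * ell x))))
      with (- (a * (integrand p a x * (2 * x ^ 2 / ((x ^ 2 + 2) * ell x))))) by ring.
    assert (Hg0 : 0 <= 2 * x ^ 2 / ((x ^ 2 + 2) * ell x)).
    { apply Rdiv_le_0_compat. nra. apply Rmult_lt_0_compat; nra. }
    rewrite Rabs_Ropp, Rabs_mult, (Rabs_pos_eq (_ * _)) by (apply Rmult_le_pos; lra).
    assert (Hg : 2 * x ^ 2 / ((x ^ 2 + 2) * ell x) <= 2 / ell y).
    { apply Rle_trans with (2 / ell x).
      - unfold Rdiv. rewrite Rinv_mult. rewrite <- Rmult_assoc.
        apply Rmult_le_compat_r. left; apply Rinv_0_lt_compat; lra.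
        apply (Rmult_le_reg_r (x^2+2)). nra. rewrite Rmult_assoc, Rinv_l by nra. nra.
      - apply Rmult_le_compat_l; [lra|]. apply Rinv_le_contravar; lra. }
    pose proof (Rabs_pos a).
    replace (2 * Rabs a / ell y * integrand p a x) with (Rabs a * (integrand p a x * (2 / ell y))) by (field; lra).
    apply Rmult_le_compat_l; auto. apply Rmult_le_compat_l; lra. }
  assert (Hprod2 : filter_prod (at_point y) (Rbar_locally p_infty)
       (fun ab : R * R => forall x, fst ab <= x <= snd ab ->
         norm (plus ((fun y0 : R => scal (p - 1) (integrand p a y0)) x) (dF p a x))
        <= scal (2 * Rabs a / ell y) (integrand p a x))).
  { apply (Filter_prod _ _ _ (fun x => x = y) (fun b => y < b)). reflexivity. exists y; auto.
    intros x b -> Hb z Hz. apply Hpt. simpl in Hz. lra. }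
  pose proof (RInt_gen_norm _ _ _ _ Hfp Hprod2 HS HG) as Hn.
  change (Rabs ((p - 1) * I + (0 - Fp p a y)) <= 2 * Rabs a / ell y * I) in Hn.
  replace ((p - 1) * I - Fp p a y) with ((p - 1) * I + (0 - Fp p a y)) by ring. exact Hn.
Qed.

Definition Phi p a b := RInt (integrand p a) 1 b.

Lemma f_exRInt p a x y : 0 < x -> 0 < y -> ex_RInt (integrand p a) x y.
Proof. intros. apply (@ex_RInt_continuous R_CompleteNormedModule). intros z Hz. apply f_cont.
  apply Rlt_le_trans with (Rmin x y); [|lra]. apply Rmin_glb_lt; auto. Qed.

Lemma Phi_der p a b : 0 < b -> is_derive (Phi p a) b (integrand p a b).
Proof. intros Hb. apply (@is_derive_RInt R_NormedModule (integrand p a) (Phi p a) 1 b).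
  - exists (mkposreal (b/2) ltac:(lra)). intros z Hz.
    change (Rabs (z - b) < b/2) in Hz. apply Rabs_lt_between in Hz.
    apply (@RInt_correct R_CompleteNormedModule), f_exRInt; lra.
  - apply f_cont; auto. Qed.

Lemma Phi_cont p a b : 0 < b -> continuous (Phi p a) b.
Proof. intros. apply (@ex_derive_continuous R_AbsRing R_NormedModule).
  eexists; apply Phi_der; auto. Qed.

Lemma Phi_diff p a x y : 0 < x -> 0 < y -> Phi p a y - Phi p a x = RInt (integrand p a) x y.
Proof. intros. unfold Phi. rewrite <- (RInt_Chasles _ 1 x y) by (apply f_exRInt; lra).
  change (plus ?u ?v) with (u + v). ring. Qed.

Lemma RInt_f_ge0 p a x y : 0 < x -> x <= y -> 0 <= RInt (integrand p a) x y.
Proof. intros. apply RInt_ge_0; auto. apply f_exRInt; lra.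
  intros z Hz. left; apply f_pos; lra. Qed.

Lemma Phi_mono p a x y : 0 < x -> x <= y -> Phi p a x <= Phi p a y.
Proof. intros. pose proof (Phi_diff p a x y H ltac:(lra)). pose proof (RInt_f_ge0 p a x y H H0). lra. Qed.

Lemma fin_comp p a Y0 b : 1 < p -> 0 < Y0 -> 4 * Rabs a / (p - 1) <= ell Y0 -> Y0 <= b ->
  (p - 1) / 2 * RInt (integrand p a) Y0 b <= Fp p a Y0.
Proof.
  intros Hp HY Hell Hb.
  assert (HdF : is_RInt (dF p a) Y0 b (minus (Fp p a b) (Fp p a Y0))).
  { apply (@is_RInt_derive R_CompleteNormedModule); intros x Hx; rewrite Rmin_left, Rmax_right in Hx by lra.
    apply F_der; lra. apply dF_cont; lra. }
  assert (Hex : ex_RInt (integrand p a) Y0 b) by (apply f_exRInt; lra).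
  assert (Hex1 : ex_RInt (fun x => (p-1)/2 * integrand p a x) Y0 b).
  { apply (ex_RInt_scal (V:=R_NormedModule) (integrand p a)); exact Hex. }
  assert (Hex2 : ex_RInt (fun x => - dF p a x) Y0 b).
  { apply (ex_RInt_opp (V:=R_NormedModule) (dF p a)). exists (minus (Fp p a b) (Fp p a Y0)); exact HdF. }
  assert (Hle : RInt (fun x => (p-1)/2 * integrand p a x) Y0 b <= RInt (fun x => - dF p a x) Y0 b).
  { apply RInt_le. exact Hb. exact Hex1. exact Hex2.
    intros x Hx.
    unfold dF. assert (Hx0 : 0 < x) by lra. pose proof (f_pos p a x Hx0).
    pose proof (ell_pos x). pose proof (ell_pos Y0). pose proof (ell_mono x Y0 HY ltac:(lra)).
    assert (Hg0 : 0 <= 2 * x ^ 2 / ((x ^ 2 + 2) * ell x)).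
    { apply Rdiv_le_0_compat. nra. apply Rmult_lt_0_compat; nra. }
    assert (Hg : 2 * x ^ 2 / ((x ^ 2 + 2) * ell x) <= 2 / ell Y0).
    { apply Rle_trans with (2 / ell x).
      - unfold Rdiv. rewrite Rinv_mult. rewrite <- Rmult_assoc.
        apply Rmult_le_compat_r. left; apply Rinv_0_lt_compat; lra.
        apply (Rmult_le_reg_r (x^2+2)). nra. rewrite Rmult_assoc, Rinv_l by nra. nra.
      - apply Rmult_le_compat_l; [lra|]. apply Rinv_le_contravar; lra. }
    set (g := 2 * x ^ 2 / ((x ^ 2 + 2) * ell x)) in *.
    assert (Hag : Rabs a * g <= (p - 1) / 2).
    { apply Rle_trans with (Rabs a * (2 / ell Y0)). apply Rmult_le_compat_l; auto. apply Rabs_pos.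
      apply (Rmult_le_reg_r (ell Y0)); auto. unfold Rdiv.
      rewrite Rmult_assoc, (Rmult_assoc 2), Rinv_l by lra.
      apply (Rmult_le_reg_r (/ (p-1))). apply Rinv_0_lt_compat; lra.
      unfold Rdiv in Hell. field_simplify; try lra. }
    assert (- (a * g) <= Rabs a * g).
    { rewrite <- (Rabs_pos_eq g) at 2 by auto. rewrite <- Rabs_mult. rewrite <- Rabs_Ropp. apply Rle_abs. }
    nra. }
  assert (HR1 : RInt (fun x => (p-1)/2 * integrand p a x) Y0 b = (p-1)/2 * RInt (integrand p a) Y0 b).
  { exact (RInt_scal (V:=R_CompleteNormedModule) (integrand p a) Y0 b ((p-1)/2) Hex). }
  assert (HR2 : RInt (fun x => - dF p a x) Y0 b = - (Fp p a b - Fp p a Y0)).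
  { apply (is_RInt_unique (V:=R_CompleteNormedModule)).
    exact (is_RInt_opp (V:=R_NormedModule) _ _ _ _ HdF). }
  rewrite HR1, HR2 in Hle. pose proof (F_pos p a b). lra.
Qed.

Definition Y0 p a := exp (2 * Rabs a / (p - 1) + 1).

Lemma Y0_ge1 p a : 1 < p -> 1 <= Y0 p a.
Proof. intros. unfold Y0. pose proof (exp_ineq1_le (2 * Rabs a / (p - 1) + 1)).
  assert (0 <= 2 * Rabs a / (p - 1)) by (apply Rdiv_le_0_compat; [pose proof (Rabs_pos a)|]; lra). lra. Qed.

Lemma Y0_ell p a y : 1 < p -> Y0 p a <= y -> 4 * Rabs a / (p - 1) <= ell y.
Proof. intros Hp Hy. pose proof (Y0_ge1 p a Hp).
  apply Rle_trans with (ell (Y0 p a)); [|apply ell_mono; lra].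
  unfold ell. apply Rle_trans with (ln (Y0 p a * Y0 p a)).
  - rewrite ln_mult by lra. unfold Y0 at 1 2. rewrite ln_exp.
    unfold Rdiv. lra.
  - apply ln_le; [nra|]. simpl. nra.
Qed.

Lemma exists_L p a : 1 < p -> exists L, (forall b, 0 < b -> Phi p a b <= L) /\
  forall y, 0 < y -> is_RInt_gen (integrand p a) (at_point y) (Rbar_locally p_infty) (L - Phi p a y).
Proof.
  intros Hp. set (Y := Y0 p a). pose proof (Y0_ge1 p a Hp) as HY1. fold Y in HY1.
  set (M := Phi p a Y + 2 * Fp p a Y / (p - 1)).
  assert (HM : forall b, 1 <= b -> Phi p a b <= M).
  { intros b Hb. pose proof (F_pos p a Y).
    assert (0 <= 2 * Fp p a Y / (p - 1)) by (apply Rdiv_le_0_compat; lra).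
    destruct (Rle_or_lt b Y).
    - pose proof (Phi_mono p a b Y ltac:(lra) H1). unfold M. lra.
    - pose proof (Phi_diff p a Y b ltac:(lra) ltac:(lra)).
      pose proof (fin_comp p a Y b Hp ltac:(lra) (Y0_ell p a Y Hp (Rle_refl _)) ltac:(lra)).
      unfold M. assert (RInt (integrand p a) Y b <= 2 * Fp p a Y / (p - 1)).
      { apply (Rmult_le_reg_l ((p-1)/2)). lra. field_simplify; lra. }
      lra. }
  set (E := fun v => exists b, 1 <= b /\ v = Phi p a b).
  destruct (completeness E) as [L [HL1 HL2]].
  { exists M. intros v [b [Hb ->]]. apply HM; auto. }
  { exists (Phi p a 1). exists 1. split; lra. }
  assert (Hup : forall b, 0 < b -> Phi p a b <= L).
  { intros b Hb. destruct (Rle_or_lt 1 b).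
    - apply HL1. exists b; auto.
    - apply Rle_trans with (Phi p a 1). apply Phi_mono; lra. apply HL1. exists 1; split; lra. }
  exists L. split; auto.
  assert (Hlim : filterlim (Phi p a) (Rbar_locally p_infty) (locally L)).
  { apply filterlim_locally. intros eps.
    destruct (classic (exists b, 1 <= b /\ L - eps < Phi p a b)) as [[b1 [Hb1 Hb2]]|Hn].
    - exists b1. intros x Hx. change (Rabs (Phi p a x - L) < eps).
      pose proof (Phi_mono p a b1 x ltac:(lra) ltac:(lra)). pose proof (Hup x ltac:(lra)).
      rewrite Rabs_left1 by lra. lra.
    - exfalso. assert (L <= L - eps).
      { apply HL2. intros v [b [Hb ->]]. destruct (Rle_or_lt (Phi p a b) (L - eps)); auto.
        exfalso; apply Hn; exists b; auto. }
      pose proof (cond_pos eps). lra. }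
  intros y Hy.
  assert (Hprod : forall P : R -> Prop, (forall x, y <= x -> P x) ->
     filter_prod (at_point y) (Rbar_locally p_infty)
       (fun ab : R * R => forall x, Rmin (fst ab) (snd ab) <= x <= Rmax (fst ab) (snd ab) -> P x)).
  { intros P HP. apply (Filter_prod _ _ _ (fun x => x = y) (fun b => y < b)).
    reflexivity. exists y; auto.
    intros x b -> Hb z Hz. simpl in Hz. rewrite Rmin_left, Rmax_right in Hz by lra. apply HP; lra. }
  apply (is_RInt_gen_ext (Derive (Phi p a))).
  - apply (Filter_prod _ _ _ (fun x => x = y) (fun b => y < b)). reflexivity. exists y; auto.
    intros x b -> Hb z Hz. simpl in Hz. rewrite Rmin_left, Rmax_right in Hz by lra.
    apply is_derive_unique, Phi_der; lra.
  - apply is_RInt_gen_Derive.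
    + apply Hprod. intros x Hx. exists (integrand p a x). apply Phi_der; lra.
    + apply Hprod. intros x Hx. apply (continuous_ext_loc _ (integrand p a)).
      * assert (Hx0 : 0 < x) by lra. exists (mkposreal x Hx0). intros z Hz.
        symmetry; apply is_derive_unique, Phi_der.
        change (Rabs (z - x) < x) in Hz. apply Rabs_lt_between in Hz. lra.
      * apply f_cont; lra.
    + apply filterlim_at_point_self.
    + exact Hlim.
Qed.

Lemma exists_root p a tau : 1 < p -> 0 < tau -> exists y, 0 < y /\
  is_RInt_gen (integrand p a) (at_point y) (Rbar_locally p_infty) tau.
Proof.
  intros Hp Ht. destruct (exists_L p a Hp) as [L [HLup HL]].
  pose proof ln2_gt as L2.
  destruct (F_lim p a Hp (tau * (p - 1) / 2) ltac:(apply Rdiv_lt_0_compat; nra)) as [M2 HM2].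
  set (y2 := Rmax M2 (Y0 p a) + 1).
  pose proof (Y0_ge1 p a Hp).
  assert (Hy2a : Y0 p a <= y2) by (unfold y2; pose proof (Rmax_r M2 (Y0 p a)); lra).
  assert (Hy2b : M2 < y2) by (unfold y2; pose proof (Rmax_l M2 (Y0 p a)); lra).
  assert (Hy2 : 1 < y2) by (unfold y2; pose proof (Rmax_r M2 (Y0 p a)); lra).
  assert (HJ2 : L - Phi p a y2 < tau).
  { pose proof (Ibound p a y2 _ Hp ltac:(lra) (HL y2 ltac:(lra))) as Hb.
    pose proof (HLup y2 ltac:(lra)).
    pose proof (Y0_ell p a y2 Hp Hy2a). pose proof (ell_pos y2).
    assert (2 * Rabs a / ell y2 <= (p - 1) / 2).
    { apply (Rmult_le_reg_r (ell y2)); auto. unfold Rdiv. rewrite Rmult_assoc, Rinv_l by lra.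
      unfold Rdiv in H0. apply (Rmult_le_reg_r (/ (p-1))). apply Rinv_0_lt_compat; lra.
      field_simplify; lra. }
    assert (2 * Rabs a / ell y2 * (L - Phi p a y2) <= (p - 1) / 2 * (L - Phi p a y2)).
    { apply Rmult_le_compat_r; lra. }
    pose proof (HM2 y2 Hy2b). apply Rabs_le_between in Hb. nra. }
  set (A := (Rabs (ln tau) + 1 + p * ln 2 + Rabs a) / (p - 1) + 1).
  assert (HA0 : 1 <= A).
  { unfold A. assert (0 <= (Rabs (ln tau) + 1 + p * ln 2 + Rabs a) / (p - 1)).
    { apply Rdiv_le_0_compat; [pose proof (Rabs_pos (ln tau)); pose proof (Rabs_pos a); nra|lra]. } lra. }
  set (y1 := exp (- A)).
  assert (Hy10 : 0 < y1) by apply exp_pos.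
  assert (Hy1h : 2 * y1 <= 1).
  { unfold y1. pose proof (exp_ineq1_le 1). assert (Hq : exp (- A) <= exp (- (1))) by (apply exp_le_exp; lra).
    rewrite (exp_Ropp 1) in Hq. assert (/ exp 1 <= / 2) by (apply Rinv_le_contravar; lra). lra. }
  set (m := exp (- (p * ln (2 * y1)) - Rabs a)).
  assert (HJ1 : tau < L - Phi p a y1).
  { assert (Hr : y1 * m <= RInt (integrand p a) y1 (2 * y1)).
    { replace (y1 * m) with (RInt (fun _ => m) y1 (2 * y1)).
      2: { rewrite (@RInt_const R_CompleteNormedModule). change ((2 * y1 - y1) * m = y1 * m). ring. }
      apply RInt_le. lra. apply (@ex_RInt_const R_CompleteNormedModule).
      apply f_exRInt; lra.
      intros x Hx. rewrite f_exp by lra. unfold m. apply exp_le_exp.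
      assert (ln x <= ln (2 * y1)) by (apply ln_le; lra).
      assert (Hl : Rabs (ln (ell x)) <= 1).
      { pose proof (ell_ge x). apply Rabs_le. split. apply ln_ge_m1; auto.
        eapply Rle_trans. apply ln_le_xm1. apply ell_pos.
        assert (ell x <= ln 3) by (unfold ell; apply ln_le; [nra|]; nra).
        pose proof (ln_le_xm1 3 ltac:(lra)). lra. }
      assert (a * ln (ell x) <= Rabs a).
      { eapply Rle_trans. apply Rle_abs. rewrite Rabs_mult.
        pose proof (Rabs_pos a). pose proof (Rabs_pos (ln (ell x))). nra. }
      nra. }
    assert (Hym : tau < y1 * m).
    { unfold m. rewrite <- (exp_ln y1) at 1 by auto. rewrite <- exp_plus.
      rewrite <- (exp_ln tau) at 1 by auto. apply exp_increasing.
      rewrite ln_mult by lra. unfold y1. rewrite ln_exp.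
      assert ((p - 1) * A = Rabs (ln tau) + 1 + p * ln 2 + Rabs a + (p - 1)).
      { unfold A. field. lra. }
      pose proof (Rle_abs (ln tau)). nra. }
    pose proof (Phi_diff p a y1 (2 * y1) Hy10 ltac:(lra)).
    pose proof (HLup (2 * y1) ltac:(lra)). lra. }
  destruct (Ranalysis5.IVT_interv (fun y => tau - (L - Phi p a y)) y1 y2) as [z [Hz1 Hz2]].
  { intros x Hx. apply continuity_pt_filterlim.
    apply (continuous_minus (fun _ => tau) (fun y => L - Phi p a y)).
    apply continuous_const.
    apply (continuous_minus (fun _ => L) (Phi p a)). apply continuous_const.
    apply Phi_cont. lra. }
  lra. simpl; lra. simpl; lra.
  exists z. split. lra. replace tau with (L - Phi p a z) by lra. apply HL. lra.
Qed.

Lemma Psi_spec p a tau : 1 < p -> 0 < tau -> 0 < Psi p a tau /\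
  is_RInt_gen (integrand p a) (at_point (Psi p a tau)) (Rbar_locally p_infty) tau.
Proof. intros. unfold Psi. apply epsilon_spec. apply exists_root; auto. Qed.

Lemma hfun_exp p a s : hfun p a s =
  exp (- s + (p - 1) * ln (psi1 p a s) + a * ln (ell (psi1 p a s))).
Proof. unfold hfun, Rpower, ell. rewrite !exp_plus. reflexivity. Qed.

Lemma Hfacts p a : 1 < p -> exists C1 k, 0 < C1 /\ 0 < k /\
  forall s, 1 <= s -> 0 < psi1 p a s /\ k * s <= ell (psi1 p a s) /\
     Rabs (hfun p a s - 1 / (p - 1)) <= C1 / ell (psi1 p a s).
Proof.
  intros Hp. pose proof ln2_gt as L2.
  set (A := Rabs a). assert (HA : 0 <= A) by apply Rabs_pos.
  set (c0 := / (p - 1 + 2 * A / ln 2)).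
  assert (H2A : 0 <= 2 * A / ln 2) by (apply Rdiv_le_0_compat; lra).
  assert (Hc0 : 0 < c0) by (apply Rinv_0_lt_compat; lra).
  set (Kc := (p - 1) / 2 + A). assert (HKc : 0 < Kc) by (unfold Kc; lra).
  set (U0 := 4 * A / (p - 1)). assert (HU0 : 0 <= U0) by (apply Rdiv_le_0_compat; lra).
  set (B := 2 / (p - 1) + exp (Kc * U0 + A)).
  assert (HB : 0 < B).
  { unfold B. pose proof (exp_pos (Kc * U0 + A)). assert (0 < 2 / (p-1)) by (apply Rdiv_lt_0_compat; lra). lra. }
  set (D := Rabs (A - ln c0) + 1).
  assert (HD : 0 < D) by (unfold D; pose proof (Rabs_pos (A - ln c0)); lra).
  set (k := Rmin (/ (2 * Kc)) (ln 2 / (2 * D))).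
  assert (Hk : 0 < k).
  { unfold k. apply Rmin_glb_lt. apply Rinv_0_lt_compat; lra. apply Rdiv_lt_0_compat; lra. }
  exists (2 * A * B / (p - 1) + 1), k. split.
  { assert (0 <= 2 * A * B / (p - 1)) by (apply Rdiv_le_0_compat; nra). lra. }
  split; auto.
  intros s Hs.
  destruct (Psi_spec p a (exp (- s)) Hp (exp_pos _)) as [Hpsi HI].
  fold (psi1 p a s) in Hpsi, HI.
  set (ps := psi1 p a s) in *.
  set (u := ell ps).
  assert (Hu : ln 2 <= u) by apply ell_ge.
  pose proof (Ibound p a ps _ Hp Hpsi HI) as Hib.
  set (H := hfun p a s).
  assert (HH : H = exp (- s + (p - 1) * ln ps + a * ln u)) by apply hfun_exp.
  set (P := exp ((p - 1) * ln ps + a * ln u)).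
  assert (HP : 0 < P) by apply exp_pos.
  assert (HFP : Fp p a ps * P = 1).
  { unfold Fp, P. rewrite <- exp_plus. fold u. rewrite <- exp_0. f_equal. ring. }
  assert (HHP : H = exp (- s) * P).
  { rewrite HH. unfold P. rewrite <- exp_plus. f_equal. ring. }
  assert (Hkey : Rabs ((p - 1) * H - 1) <= 2 * A / u * H).
  { rewrite HHP. replace ((p - 1) * (exp (- s) * P) - 1) with (((p - 1) * exp (- s) - Fp p a ps) * P)
      by (rewrite <- HFP; ring).
    rewrite Rabs_mult, (Rabs_pos_eq P) by lra.
    replace (2 * A / u * (exp (- s) * P)) with ((2 * Rabs a / ell ps) * exp (- s) * P) by (unfold A, u; ring).
    apply Rmult_le_compat_r; lra. }
  assert (HH0 : 0 < H) by (rewrite HH; apply exp_pos).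
  assert (Hu0 : 0 < u) by lra.
  assert (Hau : 2 * A / u <= 2 * A / ln 2).
  { apply Rmult_le_compat_l. lra. apply Rinv_le_contravar; lra. }
  assert (Hlow : c0 <= H).
  { apply Rabs_le_between in Hkey.
    assert (1 <= (p - 1 + 2 * A / ln 2) * H).
    { assert (2 * A / u * H <= 2 * A / ln 2 * H) by (apply Rmult_le_compat_r; lra). nra. }
    unfold c0. apply (Rmult_le_reg_l (p - 1 + 2 * A / ln 2)). lra.
    rewrite Rinv_r by lra. lra. }
  assert (Hlnps : ln ps <= u / 2).
  { assert (2 * ln ps <= u). { unfold u, ell.
      replace (2 * ln ps) with (ln (ps * ps)) by (rewrite ln_mult; lra).
      apply ln_le. nra. simpl. nra. }
    lra. }
  assert (Hlnu1 : -1 <= ln u) by (apply ln_ge_m1; auto).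
  assert (Hlnu2 : ln u <= u - 1) by (apply ln_le_xm1; auto).
  assert (Halu : a * ln u <= A * (u + 1)).
  { eapply Rle_trans. apply Rle_abs. rewrite Rabs_mult. apply Rmult_le_compat_l; auto.
    apply Rabs_le. lra. }
  assert (Hexpo : (p - 1) * ln ps + a * ln u <= Kc * u + A).
  { unfold Kc. assert ((p-1) * ln ps <= (p-1) * (u / 2)) by (apply Rmult_le_compat_l; lra). nra. }
  split; [exact Hpsi|split].
  -
    assert (Hs_le : s <= Kc * u + A - ln c0).
    { assert (Hl : ln c0 <= ln H) by (apply ln_le; auto).
      rewrite HH, ln_exp in Hl. lra. }
    destruct (Rle_or_lt (2 * D) s).
    + apply Rle_trans with (/ (2 * Kc) * s). apply Rmult_le_compat_r. lra. apply Rmin_l.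
      assert (A - ln c0 <= D) by (unfold D; pose proof (Rle_abs (A - ln c0)); lra).
      apply (Rmult_le_reg_l (2 * Kc)). lra. rewrite <- Rmult_assoc, Rinv_r by lra. nra.
    + apply Rle_trans with (ln 2 / (2 * D) * s). apply Rmult_le_compat_r. lra. apply Rmin_r.
      apply Rle_trans with (ln 2); [|lra].
      apply (Rmult_le_reg_l (2 * D)). lra. field_simplify; nra.
  -
    assert (HHB : H <= B).
    { destruct (Rle_or_lt U0 u) as [H0|H0].
      - assert (2 * A / u <= (p - 1) / 2).
        { unfold U0 in H0. apply (Rmult_le_reg_r u). lra. unfold Rdiv. rewrite Rmult_assoc, Rinv_l by lra.
          apply (Rmult_le_reg_r (/ (p-1))). apply Rinv_0_lt_compat; lra.
          unfold Rdiv in H0. field_simplify; lra. }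
        assert (2 * A / u * H <= (p - 1) / 2 * H) by (apply Rmult_le_compat_r; lra).
        apply Rabs_le_between in Hkey.
        assert (H <= 2 / (p - 1)).
        { apply (Rmult_le_reg_l (p-1)). lra. field_simplify; lra. }
        unfold B. pose proof (exp_pos (Kc * U0 + A)). lra.
      - assert (H <= exp (Kc * U0 + A)).
        { rewrite HH. apply exp_le_exp. assert (Kc * u <= Kc * U0) by (apply Rmult_le_compat_l; lra). lra. }
        unfold B. assert (0 < 2 / (p-1)) by (apply Rdiv_lt_0_compat; lra). lra. }
    assert (Heq : H - 1 / (p - 1) = ((p - 1) * H - 1) / (p - 1)) by (field; lra).
    rewrite Heq. unfold Rdiv at 1. rewrite Rabs_mult, (Rabs_pos_eq (/ (p-1))) by (left; apply Rinv_0_lt_compat; lra).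
    apply Rle_trans with (2 * A / u * B / (p - 1)).
    { change (2 * A / u * B / (p - 1)) with ((2 * A / u * B) * / (p - 1)). apply Rmult_le_compat_r. left; apply Rinv_0_lt_compat; lra.
      eapply Rle_trans. exact Hkey. apply Rmult_le_compat_l; auto. apply Rdiv_le_0_compat; lra. }
    apply Rle_trans with ((2 * A * B / (p - 1)) / u).
    right. field. lra.
    apply Rmult_le_compat_r. left; apply Rinv_0_lt_compat; lra. lra.
Qed.

Theorem lemmaA7 (p alpha K1 : R) (hp : 1 < p) (hK1 : 0 < K1) :
  exists C : R, 0 < C /\
    forall z s : R, Rabs z <= K1 -> 1 <= s ->
      Rabs (hfun p alpha s * Rpower (Rabs z) (p - 1) * z
              * Rpower (ln (psi1 p alpha s ^ 2 * z ^ 2 + 2)) alpha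
              / Rpower (ln (psi1 p alpha s ^ 2 + 2)) alpha
            - Rpower (Rabs z) (p - 1) * z / (p - 1))
      <= C / s.
Proof.
  pose proof ln2_gt as L2.
  set (Kp := Rmax K1 1).
  assert (HKp1 : 1 <= Kp) by apply Rmax_r.
  assert (HKpK : K1 <= Kp) by apply Rmax_l.
  set (c := 2 * ln Kp).
  assert (Hc : 0 <= c) by (unfold c; pose proof (ln_le 1 Kp ltac:(lra) HKp1) as Hl; rewrite ln_1 in Hl; lra).
  destruct (zabs p alpha c (ln Kp) hp Hc) as [C2 [HC2 Hz]].
  destruct (Hfacts p alpha hp) as [C1 [k [HC1 [Hk Hf]]]].
  set (Q := exp (p * ln Kp)).
  assert (HQ : 0 < Q) by apply exp_pos.
  set (T := C1 * (Q + C2 / ln 2) + C2 / (p - 1)).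
  assert (HT : 0 < T).
  { unfold T. assert (0 < C2 / ln 2) by (apply Rdiv_lt_0_compat; lra).
    assert (0 < C2 / (p - 1)) by (apply Rdiv_lt_0_compat; lra). nra. }
  exists (T / k). split. apply Rdiv_lt_0_compat; lra.
  intros z s Hzk Hs.
  destruct (Hf s Hs) as [Hps [Hks Hhb]].
  set (ps := psi1 p alpha s) in *.
  set (H := hfun p alpha s) in *.
  set (u := ln (ps ^ 2 + 2)).
  assert (Hue : u = ell ps) by reflexivity.
  rewrite <- Hue in Hks, Hhb.
  set (v := ln (ps ^ 2 * z ^ 2 + 2)).
  assert (Hu : ln 2 <= u) by (rewrite Hue; apply ell_ge).
  assert (Hv : ln 2 <= v) by (unfold v; apply ln_le; [lra|]; nra).
  assert (Hu0 : 0 < u) by lra.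
  assert (Hs0 : 0 < s) by lra.
  assert (Hfin : T / u <= T / k / s).
  { replace (T / k / s) with (T / (k * s)) by (field; lra).
    apply Rmult_le_compat_l. lra. apply Rinv_le_contravar; nra. }
  destruct (Req_dec z 0) as [Hz0|Hz0].
  { subst z. match goal with |- Rabs ?e <= _ => replace e with 0 by (unfold Rdiv; ring) end.
    rewrite Rabs_R0. apply Rdiv_le_0_compat; [apply Rdiv_le_0_compat|]; lra. }
  assert (Haz : 0 < Rabs z) by (apply Rabs_pos_lt; auto).
  set (zt := ln (Rabs z)).
  set (R := exp (alpha * (ln v - ln u))).
  set (W := Rpower (Rabs z) (p - 1) * z).
  set (Z := exp (p * zt)).
  assert (HW : Rabs W = Z).
  { unfold W, Z, Rpower, zt. rewrite Rabs_mult, Rabs_pos_eq by (left; apply exp_pos).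
    rewrite <- (exp_ln (Rabs z)) at 2 by auto. rewrite <- exp_plus. f_equal. ring. }
  assert (HR : Rpower v alpha / Rpower u alpha = R).
  { unfold R, Rpower. unfold Rdiv. rewrite <- exp_Ropp, <- exp_plus. f_equal. ring. }
  assert (Hexpr : H * Rpower (Rabs z) (p - 1) * z * Rpower v alpha / Rpower u alpha - W / (p - 1)
      = (H - 1 / (p - 1)) * W * R + W * (R - 1) / (p - 1)).
  { rewrite <- HR. unfold W. field. repeat split; try lra; unfold Rpower; apply Rgt_not_eq, exp_pos. }
  fold u v W. rewrite Hexpr.
  assert (Hzt : zt <= ln Kp) by (unfold zt; apply ln_le; lra).
  assert (Hvc : v <= u + c).
  { unfold v, u, c. replace (ln (ps ^ 2 + 2) + 2 * ln Kp) with (ln (Kp * Kp * (ps ^ 2 + 2))).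
    apply ln_le. nra.
    assert (z ^ 2 <= Kp * Kp).
    { replace (z ^ 2) with (Rabs z * Rabs z) by (simpl; rewrite Rmult_1_r, <- Rabs_mult, Rabs_pos_eq by nra; ring). nra. }
    assert (0 <= ps ^ 2) by nra. nra.
    rewrite !ln_mult by nra. ring. }
  assert (Hz2 : z ^ 2 = Rabs z * Rabs z).
  { simpl. rewrite Rmult_1_r, <- Rabs_mult, Rabs_pos_eq by nra. ring. }
  assert (Hpos1 : 0 <= zt -> u <= v).
  { intros H0. assert (1 <= Rabs z).
    { unfold zt in H0. rewrite <- (exp_ln (Rabs z)) by auto. pose proof (exp_ineq1_le (ln (Rabs z))). lra. }
    unfold u, v. apply ln_le. nra. assert (0 <= ps ^ 2) by nra. rewrite Hz2. assert (1 <= Rabs z * Rabs z) by nra. assert (ps^2 * 1 <= ps^2 * (Rabs z * Rabs z)) by (apply Rmult_le_compat_l; lra). lra. }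
  assert (Hneg : zt < 0 -> u + 2 * zt <= v).
  { intros H0. assert (Rabs z < 1).
    { unfold zt in H0. rewrite <- (exp_ln (Rabs z)) by auto. rewrite <- exp_0. apply exp_increasing. lra. }
    unfold u, v, zt. replace (ln (ps ^ 2 + 2) + 2 * ln (Rabs z)) with (ln (Rabs z * Rabs z * (ps ^ 2 + 2))).
    apply ln_le. nra. assert (0 <= ps ^ 2) by nra. rewrite Hz2. nra.
    rewrite !ln_mult by nra. ring. }
  pose proof (Hz u v zt Hu Hv Hvc Hzt Hpos1 Hneg) as HzB.
  fold R Z in HzB.
  assert (HZQ : Z <= Q) by (unfold Z, Q; apply exp_le_exp; nra).
  assert (HZ0 : 0 < Z) by apply exp_pos.
  assert (HR0 : 0 < R) by apply exp_pos.
  assert (HZR : Z * R <= Q + C2 / ln 2).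
  { assert (Z * R <= Z + Z * Rabs (R - 1)).
    { pose proof (Rle_abs (R - 1)). nra. }
    assert (C2 / u <= C2 / ln 2).
    { apply Rmult_le_compat_l. lra. apply Rinv_le_contravar; lra. }
    lra. }
  eapply Rle_trans; [|exact Hfin].
  eapply Rle_trans. apply Rabs_triang.
  assert (Ht1 : Rabs ((H - 1 / (p - 1)) * W * R) <= C1 / u * (Q + C2 / ln 2)).
  { rewrite !Rabs_mult, HW, (Rabs_pos_eq R) by lra.
    rewrite Rmult_assoc. apply Rmult_le_compat; auto. apply Rabs_pos. nra. }
  assert (Ht2 : Rabs (W * (R - 1) / (p - 1)) <= C2 / u / (p - 1)).
  { unfold Rdiv. rewrite !Rabs_mult, HW, (Rabs_pos_eq (/ (p - 1))) by (left; apply Rinv_0_lt_compat; lra).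
    apply Rmult_le_compat_r. left; apply Rinv_0_lt_compat; lra. exact HzB. }
  unfold T. replace ((C1 * (Q + C2 / ln 2) + C2 / (p - 1)) / u) with
    (C1 / u * (Q + C2 / ln 2) + C2 / u / (p - 1)) by (field; lra).
  lra.
Qed.
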